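(* Let $X$ be an $X$-set parameter, let $G$ be a graph, and let $R\subseteq V(G)$. Then the map $\nu_R$, $\nu_R(S)=S\ominus R$, is a graph automorphism of $\mathscr{X}^{\rm TAR}(G)$ if and only if $R$ is $X$-irrelevant.
   Context: All graphs are simple, finite, with nonempty vertex set. An $X$-set parameter is a graph parameter $X(G)$ defined as the minimum cardinality of an $X$-set of $G$, where the $X$-sets of each graph are subsets of its vertex set determined by some property satisfying: (1) supersets (within $V(G)$) of $X$-sets are $X$-sets; (2) the empty set is never an $X$-set; (3) an $X$-set of a disconnected graph is the union of an $X$-set of each component; (4) if $G$ has no isolated vertices, every set of $|V(G)|-1$ vertices is an $X$-set. The $X$-TAR graph $\mathscr{X}^{\rm TAR}(G)$ has as vertices all $X$-sets of $G$, with $S_1,S_2$ adjacent iff $|S_1\ominus S_2|=1$ (symmetric difference). The map $\nu_R$ is defined on the vertices of $\mathscr{X}^{\rm TAR}(G)$ with values in the power set of $V(G)$. A vertex $v$ of $G$ is $X$-irrelevant if $v\notin S$ for every minimal $X$-set $S$ of $G$; a set $R$ is $X$-irrelevant if all its vertices are $X$-irrelevant. *)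

(* Defs.v *)
From mathcomp Require Import all_boot.
Set Implicit Arguments. Unset Strict Implicit. Unset Printing Implicit Defensive.

Definition simple_graph (T : finType) (e : rel T) : Prop :=
  [/\ symmetric e, irreflexive e & 0 < #|T|].

Definition symdiff (T : finType) (A B : {set T}) : {set T} :=
  (A :\: B) :|: (B :\: A).

Definition ivert (T : finType) (C : {set T}) : finType := {x : T | x \in C}.

Definition induced (T : finType) (e : rel T) (C : {set T}) : rel (ivert C) :=
  fun x y => e (val x) (val y).
Arguments induced {T} e C.

Definition comp (T : finType) (e : rel T) (x : T) : {set T} :=
  [set y | connect e x y].

Record XParam := {
  Xset : forall T : finType, rel T -> {set T} -> bool;
  Xset_iso : forall (T T' : finType) (e : rel T) (e' : rel T') (f : T -> T'),
      simple_graph e -> bijective f -> (forall x y, e' (f x) (f y) = e x y) ->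
      forall S : {set T}, Xset e' (f @: S) = Xset e S;
  Xset_super : forall (T : finType) (e : rel T) (S S' : {set T}),
      simple_graph e -> Xset e S -> S \subset S' -> Xset e S';
  Xset_nonempty : forall (T : finType) (e : rel T),
      simple_graph e -> ~~ Xset e set0;
  Xset_components : forall (T : finType) (e : rel T),
      simple_graph e -> (exists x y, ~~ connect e x y) ->
      forall S : {set T},
        Xset e S <->
        (forall x : T, Xset (induced e (comp e x)) [set y | val y \in S]);
  Xset_no_isolated : forall (T : finType) (e : rel T),
      simple_graph e -> (forall x, exists y, e x y) ->
      forall S : {set T}, #|S| = #|T|.-1 -> Xset e S
}.

Definition TARvert (X : XParam) (T : finType) (e : rel T) : finType :=
  {S : {set T} | Xset X e S}.

Definition TARadj (X : XParam) (T : finType) (e : rel T) : rel (TARvert X e) :=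
  fun S1 S2 => #|symdiff (val S1) (val S2)| == 1.
Arguments TARadj X {T} e.

Definition graph_aut (V : finType) (adj : rel V) (f : V -> V) : Prop :=
  bijective f /\ forall x y, adj (f x) (f y) = adj x y.

Definition nuR_is_aut (X : XParam) (T : finType) (e : rel T) (R : {set T}) : Prop :=
  exists f : TARvert X e -> TARvert X e,
    graph_aut (TARadj X e) f /\ forall S, val (f S) = symdiff (val S) R.

Definition Xirrelevant_vertex (X : XParam) (T : finType) (e : rel T) (v : T) :=
  forall M : {set T}, minset (Xset X e) M -> v \notin M.

Definition Xirrelevant (X : XParam) (T : finType) (e : rel T) (R : {set T}) :=
  forall v, v \in R -> Xirrelevant_vertex X e v.

(* Main.v *)
Require Import Defs.
From mathcomp Require Import all_boot.

Lemma symdiffK (T : finType) (S R : {set T}) : symdiff (symdiff S R) R = S.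
Proof.
apply/setP => x; rewrite /symdiff !inE.
by case: (x \in S); case: (x \in R).
Qed.

Lemma symdiff_cancel (T : finType) (S1 S2 R : {set T}) :
  symdiff (symdiff S1 R) (symdiff S2 R) = symdiff S1 S2.
Proof.
apply/setP => x; rewrite /symdiff !inE.
by case: (x \in S1); case: (x \in S2); case: (x \in R).
Qed.

Theorem theorem2p8 (X : XParam) (T : finType) (e : rel T)
    (HG : simple_graph e) (R : {set T}) :
  nuR_is_aut X e R <-> Xirrelevant X e R.
Proof.
split.
- move=> [f [_ Hf]] v vR M HM; apply/negP => vM.
  move/minsetP: HM => [XM Mmin].
  have XS : Xset X e (M :|: R) by apply: (Xset_super HG XM); exact: subsetUl.
  have := Hf (exist _ (M :|: R) XS) => /= HfS.
  have HD : symdiff (M :|: R) R = M :\: R.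
    by apply/setP => x; rewrite /symdiff !inE; case: (x \in M); case: (x \in R).
  have XD : Xset X e (M :\: R).
    by rewrite -HD -HfS; exact: (valP (f (exist _ (M :|: R) XS))).
  have := Mmin _ XD (subsetDl M R) => /setP /(_ v).
  by rewrite !inE vR vM.
- move=> Hirr.
  have HX : forall S : TARvert X e, Xset X e (symdiff (val S) R).
    move=> [S XS] /=.
    case: (minset_exists XS) => M HM sMS.
    have XM : Xset X e M by case/minsetP: HM.
    apply: (Xset_super HG XM).
    apply/subsetP => x xM.
    have xnR : x \notin R.
      by apply/negP => xR; move: (Hirr x xR M HM); rewrite xM.
    by rewrite /symdiff !inE (subsetP sMS x xM) (negbTE xnR).
  pose f (S : TARvert X e) : TARvert X e := exist _ (symdiff (val S) R) (HX S).
  exists f; split; last by [].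
  split.
  + exists f => S; apply: val_inj; rewrite /= symdiffK //.
  + by move=> S1 S2; rewrite /TARadj /= symdiff_cancel.
Qed.
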